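(* Let $\mathcal{C}$ be a family of grounded curves (not necessarily $x$-monotone), where each curve $\gamma\in\mathcal{C}$ has a designated endpoint $p(\gamma)$ on the line $\{x=0\}$ and these endpoints have pairwise distinct $y$-coordinates. Let $G$ be the intersection graph of $\mathcal{C}$, and let $<$ be the total ordering of $\mathcal{C}$ according to the $y$-coordinates of the endpoints $p(\gamma)$. Then: (1) $G_<$ does not contain $M_1$ as an induced ordered subgraph; (2) if, in addition, all members of $\mathcal{C}$ are $x$-monotone, then the complement $\overline{G}_<$ (with the same ordering) does not contain the monotone path $P_4$ as an induced ordered subgraph.
   Context: A curve is the image of a continuous map $\phi:[0,1]\to\mathbb{R}^2$; it is $x$-monotone if every vertical line meets it in at most one point. A curve is grounded if one of its endpoints lies on $\{x=0\}$ and the whole curve lies in $\{x\ge0\}$. The intersection graph has the curves as vertices, adjacent iff they intersect. An ordered graph is a graph with a total order on its vertices; $H_{<'}$ is an induced ordered subgraph of $G_<$ if there is an order-preserving injection $\phi:V(H)\to V(G)$ with $uv\in E(H)\iff \phi(u)\phi(v)\in E(G)$. $M_1$ is the ordered graph on $1<2<3<4$ with edges $\{1,3\}$ and $\{2,4\}$ only. $P_4$ is the ordered graph on $v_1<v_2<v_3<v_4$ with edges $v_1v_2,v_2v_3,v_3v_4$ only. *)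

(* Defs.v *)
From HB Require Import structures.
From mathcomp Require Import all_boot all_order all_algebra.
From mathcomp Require Import all_classical all_reals all_analysis.
Set Implicit Arguments. Unset Strict Implicit. Unset Printing Implicit Defensive.
Import Order.TTheory GRing.Theory Num.Theory.
Import numFieldNormedType.Exports.
Local Open Scope classical_set_scope.
Local Open Scope ring_scope.

Section Curves.
Variable R : realType.

Definition I01 : set R := `[0, 1]%classic.

(* A curve is given by a parametrization phi : [0,1] -> R^2, continuous on [0,1];
   the curve itself is the image phi @` [0,1]. *)
Definition is_curve (phi : R -> R * R) : Prop :=
  {within I01, continuous phi}.

Definition curve_img (phi : R -> R * R) : set (R * R) := phi @` I01.

(* Grounded, with designated endpoint p = phi 0 on {x = 0}; the whole curve
   lies in {x >= 0}. *)
Definition grounded (phi : R -> R * R) : Prop :=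
  (phi 0).1 = 0 /\ (forall t, I01 t -> 0 <= (phi t).1).

Definition x_monotone (phi : R -> R * R) : Prop :=
  forall P Q, P \in curve_img phi -> Q \in curve_img phi -> P.1 = Q.1 -> P = Q.

Definition curves_meet (phi psi : R -> R * R) : Prop :=
  curve_img phi `&` curve_img psi !=set0.

End Curves.

Definition induced_ordered_subgraph (n : nat) (H : rel 'I_n)
  (V : Type) (lt : V -> V -> Prop) (adj : V -> V -> Prop) : Prop :=
  exists f : 'I_n -> V,
    injective f /\
    (forall i j : 'I_n, (i < j)%N -> lt (f i) (f j)) /\
    (forall i j : 'I_n, i != j -> (H i j <-> adj (f i) (f j))).

(* M_1 on 1<2<3<4 (here 0<1<2<3) with edges {1,3},{2,4} only *)
Definition M1_rel : rel 'I_4 := fun i j =>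
  [|| ((i : nat) == 0%N) && ((j : nat) == 2%N), ((i : nat) == 2%N) && ((j : nat) == 0%N),
      ((i : nat) == 1%N) && ((j : nat) == 3%N) | ((i : nat) == 3%N) && ((j : nat) == 1%N)].

Definition P4_rel : rel 'I_4 := fun i j =>
  ((i : nat) == j.+1) || ((j : nat) == i.+1).

Definition intersection_adj (R : realType) (I : Type) (c : I -> R -> R * R)
  (a b : I) : Prop := a <> b /\ curves_meet (c a) (c b).

Definition complement_adj (R : realType) (I : Type) (c : I -> R -> R * R)
  (a b : I) : Prop := a <> b /\ ~ curves_meet (c a) (c b).

Definition endpoint_lt (R : realType) (I : Type) (c : I -> R -> R * R)
  (a b : I) : Prop := ((c a 0).2 < (c b 0).2)%R.

(* Main.v *)
Require Import Defs.
From HB Require Import structures.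
From mathcomp Require Import all_boot all_order all_algebra.
From mathcomp Require Import all_classical all_reals all_analysis.
From mathcomp Require Import lra zify.
Import Order.TTheory GRing.Theory Num.Theory.
Import numFieldNormedType.Exports.
Local Open Scope classical_set_scope.
Local Open Scope ring_scope.

Definition incr (q q' : nat) : int :=
  match ((q' + 4 - q) %% 4)%N with 1%N => 1 | 3%N => -1 | _ => 0 end.
Definition opp (q q' : nat) : bool := ((q + 2) %% 4 == q')%N.

Lemma cell_lemma (q1 q2 q3 q4 : nat) : (q1 < 4)%N -> (q2 < 4)%N -> (q3 < 4)%N -> (q4 < 4)%N ->
  ~~ opp q1 q2 -> ~~ opp q1 q3 -> ~~ opp q1 q4 -> ~~ opp q2 q3 -> ~~ opp q2 q4 -> ~~ opp q3 q4 ->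
  incr q1 q2 + incr q2 q4 = incr q1 q3 + incr q3 q4.
Proof.
by case: q1 => [|[|[|[|q1]]]] //; case: q2 => [|[|[|[|q2]]]] //; case: q3 => [|[|[|[|q3]]]] //;
   case: q4 => [|[|[|[|q4]]]].
Qed.

Definition lR (q : nat) : int := if q == 3%N then -1 else q%:Z.

Lemma edgeR (q q' : nat) : (q < 4)%N -> (q' < 4)%N -> q != 2%N -> q' != 2%N -> ~~ opp q q' ->
  incr q q' = lR q' - lR q.
Proof. by case: q => [|[|[|[|q]]]] //; case: q' => [|[|[|[|q']]]]. Qed.

Lemma edgeL (q q' : nat) : (q < 4)%N -> (q' < 4)%N -> q != 0%N -> q' != 0%N -> ~~ opp q q' ->
  incr q q' = q'%:Z - q%:Z.
Proof. by case: q => [|[|[|[|q]]]] //; case: q' => [|[|[|[|q']]]]. Qed.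

Lemma telesc (f : nat -> nat) (l : nat -> int) n :
  (forall i, (i < n)%N -> incr (f i) (f i.+1) = l (f i.+1) - l (f i)) ->
  \sum_(i < n) incr (f i) (f i.+1) = l (f n) - l (f 0%N).
Proof.
elim: n => [|n IH] h; first by rewrite big_ord0 subrr.
rewrite big_ord_recr /= IH; last by move=> i lt; apply: h; lia.
by rewrite h // addrC addrA subrK.
Qed.

Section Stokes.
Variable q : nat -> nat -> nat.
Variables N M : nat.
Hypothesis hcell : forall i j, (i < N)%N -> (j < M)%N ->
  incr (q i j) (q i.+1 j) + incr (q i.+1 j) (q i.+1 j.+1) =
  incr (q i j) (q i j.+1) + incr (q i j.+1) (q i.+1 j.+1).
Definition Hs j := \sum_(i < N) incr (q i j) (q i.+1 j).
Definition Vs i := \sum_(j < M) incr (q i j) (q i j.+1).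

Lemma row_step k : (k < M)%N -> Hs k + incr (q N k) (q N k.+1) = incr (q 0 k) (q 0 k.+1) + Hs k.+1.
Proof.
move=> kM; rewrite /Hs.
suff : forall n, (n <= N)%N -> \sum_(i < n) incr (q i k) (q i.+1 k) + incr (q n k) (q n k.+1) =
  incr (q 0 k) (q 0 k.+1) + \sum_(i < n) incr (q i k.+1) (q i.+1 k.+1) by apply.
elim => [|n IH] nN; first by rewrite !big_ord0 add0r addr0.
have nN' : (n < N)%N by lia.
rewrite !big_ord_recr /= -addrA (hcell n k nN' kM).
by rewrite addrA IH ?addrA //; lia.
Qed.

Lemma stokes : Hs 0 + Vs N = Vs 0 + Hs M.
Proof.
rewrite /Vs.
suff : forall m, (m <= M)%N -> Hs 0 + \sum_(j < m) incr (q N j) (q N j.+1) =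
  \sum_(j < m) incr (q 0 j) (q 0 j.+1) + Hs m by apply.
elim => [|m IH] mM; first by rewrite !big_ord0 add0r addr0.
rewrite !big_ord_recr /= addrA IH; last by lia.
by rewrite -addrA row_step ?addrA //; lia.
Qed.
End Stokes.
Section Q.
Variable R : realType.
Definition quad2 (x y : R) : nat :=
  if (0 < x) && (0 <= y) then 0%N else if (x <= 0) && (0 < y) then 1%N
  else if (x < 0) && (y <= 0) then 2%N else 3%N.

Lemma quad2_lt4 x y : (quad2 x y < 4)%N.
Proof. by rewrite /quad2; repeat case: ifP. Qed.

Lemma quad2P x y :
  [/\ quad2 x y = 0%N -> 0 < x /\ 0 <= y, quad2 x y = 1%N -> x <= 0 /\ 0 < y,
      quad2 x y = 2%N -> x < 0 /\ y <= 0 & quad2 x y = 3%N -> 0 <= x /\ y <= 0].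
Proof.
rewrite /quad2; case: ifPn => [/andP[-> ->] //|h1].
case: ifPn => [/andP[-> ->] //|h2].
case: ifPn => [/andP[-> ->] //|h3].
split => // _.
case: (ltrP x 0) => hx.
  move: h3 h2; rewrite hx /= -ltNge => y0; rewrite (ltW hx) y0 //.
case: (ltrP 0 y) => hy; last by [].
move: h1 h2; rewrite hy (ltW hy) !andbT -ltNge -leNgt => h1 h2; lra.
Qed.

Lemma quad2_nopp a b c d : 0 < a * c + b * d -> ~~ opp (quad2 a b) (quad2 c d).
Proof.
move=> h; have := quad2_lt4 a b; have := quad2_lt4 c d.
have [P0 P1 P2 P3] := quad2P a b; have [Q0 Q1 Q2 Q3] := quad2P c d.
case E1: (quad2 a b) P0 P1 P2 P3 => [|[|[|[|?]]]] P0 P1 P2 P3;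
case E2: (quad2 c d) Q0 Q1 Q2 Q3 => [|[|[|[|?]]]] Q0 Q1 Q2 Q3 //= _ _.
- have [] := P0 erefl; have [] := Q2 erefl; nra.
- have [] := P1 erefl; have [] := Q3 erefl; nra.
- have [] := P2 erefl; have [] := Q0 erefl; nra.
- have [] := P3 erefl; have [] := Q1 erefl; nra.
Qed.
End Q.
Section S.
Variable R : realType.
Implicit Types (P Q : R * R) (K : set (R * R)).

Lemma I01P (s : R) : I01 s <-> 0 <= s <= 1.
Proof. by rewrite /I01 /= in_itv /=. Qed.

Definition chain (e : R) K P Q : Prop :=
  exists N (f : nat -> R * R), [/\ f 0%N = P, f N = Q,
    (forall i, (i <= N)%N -> K (f i)) & (forall i, (i < N)%N -> `|f i - f i.+1| < e)].

Lemma chain_refl e K P : K P -> chain e K P P.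
Proof. by move=> KP; exists 0%N, (fun _ => P); split => // i; rewrite ltn0. Qed.

Lemma chain_snoc {e K P Q Q'} : chain e K P Q -> K Q' -> `|Q - Q'| < e -> chain e K P Q'.
Proof.
move=> [N [f [f0 fN fK fe]]] KQ' hQ.
exists N.+1, (fun i => if (i <= N)%N then f i else Q'); split => //.
- by rewrite ltnn.
- by move=> i; case: ifP => // /fK.
- move=> i; rewrite ltnS => iN; rewrite iN.
  have [lt|->] : (i < N)%N \/ i = N by lia.
    by rewrite lt; apply: fe.
  by rewrite ltnn fN.
Qed.

Lemma chain_cat {e K P Q S} : chain e K P Q -> chain e K Q S -> chain e K P S.
Proof.
move=> [N1 [f1 [f10 f1N f1K f1e]]] [N2 [f2 [f20 f2N f2K f2e]]].
exists (N1 + N2)%N, (fun i => if (i <= N1)%N then f1 i else f2 (i - N1)%N); split => //.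
- case: N2 f2N {f2K f2e} => [|n] f2N.
    by rewrite addn0 leqnn f1N -f2N f20.
  have -> : (N1 + n.+1 <= N1)%N = false by lia.
  by rewrite addKn.
- move=> i iN; case: ifP => [/f1K //|/negbT]; rewrite -ltnNge => lt; apply: f2K; lia.
- move=> i iN; case: (ltngtP i N1) => [lt|gt|eq]; last subst i.
  + exact: f1e.
  + have -> : (i.+1 - N1 = (i - N1).+1)%N by lia.
    apply: f2e; lia.
  + rewrite f1N -f20.
    have -> : (N1.+1 - N1 = 1)%N by lia.
    apply: f2e; lia.
Qed.

Lemma chain_rev {e K P Q} : chain e K P Q -> chain e K Q P.
Proof.
move=> [N [f [f0 fN fK fe]]].
exists N, (fun i => f (N - i)%N); split.
- by rewrite subn0.
- by rewrite subnn.
- move=> i _; apply: fK; exact: leq_subr.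
- move=> i iN; rewrite distrC.
  have -> : (N - i = (N - i.+1).+1)%N by lia.
  apply: fe; lia.
Qed.

Lemma chain_sub {e e' K K' P Q} : e <= e' -> K `<=` K' -> chain e K P Q -> chain e' K' P Q.
Proof.
move=> ee' KK' [N [f [f0 fN fK fe]]]; exists N, f; split => //.
- by move=> i /fK /KK'.
- by move=> i /fe /lt_le_trans; apply.
Qed.
Lemma curve_epsdelta (phi : R -> R * R) : is_curve phi ->
  forall t, I01 t -> forall e : R, 0 < e -> exists2 d : R, 0 < d &
   forall s, I01 s -> `|s - t| < d -> `|phi t - phi s| < e.
Proof.
move=> hc t It e e0.
have := hc t.
move=> /cvgrPdist_lt /(_ e e0).
rewrite {1}/nbhs /= -(nbhs_subspace_in It).
rewrite /within /= => /nbhs_ballP [d d0 hd].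
exists d => // s Is hs.
have := hd s; rewrite /ball /= distrC => /(_ hs Is).
done.
Qed.

Lemma curve_img_in (phi : R -> R * R) s : I01 s -> curve_img phi (phi s).
Proof. by move=> Is; exists s. Qed.

Lemma curve_chain (phi : R -> R * R) e T : is_curve phi -> 0 < e -> I01 T ->
  chain e (curve_img phi) (phi 0) (phi T).
Proof.
move=> hc e0 IT; have /I01P /andP [T0 T1] := IT.
have I0 : I01 (0 : R) by apply/I01P; rewrite lexx ler01.
pose S := [set s | 0 <= s <= T /\ chain e (curve_img phi) (phi 0) (phi s)].
have hS : has_sup S.
  split; first by exists 0; split; [by rewrite lexx T0|apply: chain_refl; exact: curve_img_in].
  by exists T => s [/andP [_ ->]].
set sg := sup S.
have sg0 : 0 <= sg.
  apply: (sup_upper_bound hS); split; [by rewrite lexx T0|apply: chain_refl; exact: curve_img_in].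
have sgT : sg <= T by apply: ge_sup; [case: hS|move=> s [/andP [_ ->]]].
have Isg : I01 sg by apply/I01P; rewrite sg0 (le_trans sgT T1).
have e2 : 0 < e / 2 by rewrite divr_gt0.
have [d d0 hd] := @curve_epsdelta phi hc sg Isg _ e2.
have [s0 [/andP [s00 s0T] ch0] lts0] := sup_adherent d0 hS.
rewrite -/sg in lts0.
have s0sg : s0 <= sg by apply: (sup_upper_bound hS); split => //; rewrite s00.
have chsg : chain e (curve_img phi) (phi 0) (phi sg).
  apply: (chain_snoc ch0); first exact: curve_img_in.
  rewrite distrC; apply: (lt_trans (hd s0 _ _)); first by apply/I01P; rewrite s00 (le_trans s0T T1).
    by rewrite ler0_norm ?subr_le0 //; lra.
  by rewrite ltr_pdivrMr // ltr_pMr // ltr1n.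
have [ltT|] := ltrP sg T; last by move=> Tsg; have -> : T = sg by apply/eqP; rewrite eq_le Tsg sgT.
exfalso.
pose t := if T - sg < d then T else sg + d / 2.
have tsg : sg < t by rewrite /t; case: ifP => _ //; rewrite ltrDl divr_gt0.
have tT : t <= T by rewrite /t; case: ifPn => //; rewrite -leNgt => h; rewrite -lerBrDl (le_trans _ h) // ler_pdivrMr // ler_pMr // ler1n.
have dt : `|t - sg| < d.
  rewrite gtr0_norm ?subr_gt0 // /t; case: ifP => // _.
  by rewrite addrC addKr ltr_pdivrMr // ltr_pMr // ltr1n.
have It : I01 t by apply/I01P; rewrite (le_trans sg0 (ltW tsg)) (le_trans tT T1).
have : S t.
  split; first by rewrite tT (le_trans sg0 (ltW tsg)).
  apply: (chain_snoc chsg); first exact: curve_img_in.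
  apply: (lt_trans (hd t It dt)).
  by rewrite ltr_pdivrMr // ltr_pMr // ltr1n.
move=> /(sup_upper_bound hS); rewrite -/sg => /(lt_le_trans tsg); by rewrite ltxx.
Qed.
Lemma curve_sep (phi psi : R -> R * R) : is_curve phi -> is_curve psi ->
  ~ curves_meet phi psi ->
  exists2 m : R, 0 < m & forall s t, I01 s -> I01 t -> m <= `|phi s - psi t|.
Proof.
move=> hp hq hm.
have c1 : compact (curve_img phi) by apply: continuous_compact => //; exact: segment_compact.
have c2 : compact (curve_img psi) by apply: continuous_compact => //; exact: segment_compact.
have c12 := compact_setX c1 c2.
have ne : (curve_img phi `*` curve_img psi) !=set0.
  exists (phi 0, psi 0); split; exists 0 => //; rewrite /I01 /= in_itv /= lexx ler01 //.
have cf : {within curve_img phi `*` curve_img psi, continuous (fun z : (R*R)*(R*R) => `|z.1 - z.2|)}.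
  apply: continuous_subspaceT => z.
  exact: (continuous_comp (@sub_continuous _ z) (@norm_continuous _ _ _)).
have [z zin zmin] := compact_EVT_min ne c12 cf.
exists `|z.1 - z.2|.
  rewrite normr_gt0 subr_eq0; apply/negP => /eqP ez.
  apply: hm; exists z.1; rewrite inE in zin; case: zin => h1 h2; split => //; rewrite ez //.
move=> s t Is It; apply: (zmin (phi s, psi t)); rewrite inE; split; [exists s|exists t] => //.
Qed.
End S.

Arguments quad2 {R}.
Arguments quad2_lt4 {R}.
Arguments quad2_nopp {R}.
Arguments quad2P {R}.
Section G.
Variable R : realType.
Definition dot (u v : R * R) := u.1 * v.1 + u.2 * v.2.
Definition quad (u : R * R) := quad2 u.1 u.2.

Lemma quad2_up (x y : R) : x = 0 -> 0 < y -> quad2 x y = 1%N.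
Proof. by move=> -> y0; rewrite /quad2 ltxx lexx y0. Qed.
Lemma quad2_down (x y : R) : x = 0 -> y < 0 -> quad2 x y = 3%N.
Proof. by move=> -> y0; rewrite /quad2 ltxx lexx /= (lt_gtF y0). Qed.
Lemma quad2_R (x y : R) : 0 <= x -> quad2 x y != 2%N.
Proof. by move=> x0; have [_ _ h _] := quad2P x y; apply/eqP => /h [] /(le_lt_trans x0); rewrite ltxx. Qed.
Lemma quad2_L (x y : R) : x <= 0 -> quad2 x y != 0%N.
Proof. by move=> x0; have [h _ _ _] := quad2P x y; apply/eqP => /h [] /lt_le_trans /(_ x0); rewrite ltxx. Qed.

Lemma subE (u v : R * R) : (u - v).1 = u.1 - v.1 /\ (u - v).2 = u.2 - v.2.
Proof. by []. Qed.

Lemma grid_contra (al be : nat -> R * R) (N M : nat) (ya yb yc ye : R) :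
  al 0%N = (0, ya) -> al N = (0, yc) -> be 0%N = (0, yb) -> be M = (0, ye) ->
  ya < yb -> yb < yc -> (ye < ya \/ yc < ye) ->
  (forall i, (i <= N)%N -> 0 <= (al i).1) -> (forall j, (j <= M)%N -> 0 <= (be j).1) ->
  (forall i i' j j', (i <= N)%N -> (i' <= N)%N -> (j <= M)%N -> (j' <= M)%N ->
     (i' <= i.+1)%N -> (i <= i'.+1)%N -> (j' <= j.+1)%N -> (j <= j'.+1)%N ->
     0 < dot (al i - be j) (al i' - be j')) -> False.
Proof.
move=> al0 alN be0 beM hab hbc hE alx bex hdot.
pose q i j := quad (al i - be j).
have lt4 i j : (q i j < 4)%N by apply: quad2_lt4.
have nop i i' j j' : (i <= N)%N -> (i' <= N)%N -> (j <= M)%N -> (j' <= M)%N ->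
     (i' <= i.+1)%N -> (i <= i'.+1)%N -> (j' <= j.+1)%N -> (j <= j'.+1)%N ->
     ~~ opp (q i j) (q i' j').
  by move=> *; apply: quad2_nopp; apply: hdot.
have hcell : forall i j, (i < N)%N -> (j < M)%N ->
  incr (q i j) (q i.+1 j) + incr (q i.+1 j) (q i.+1 j.+1) =
  incr (q i j) (q i j.+1) + incr (q i j.+1) (q i.+1 j.+1).
  move=> i j iN jM; apply: cell_lemma => //; apply: nop; lia.
have := @stokes q N M hcell; rewrite /Hs /Vs.
rewrite (@telesc (fun i => q i 0%N) lR N); last first.
  move=> i iN; apply: edgeR => //; [| |apply: nop; lia];
  rewrite /q /quad; apply: quad2_R; rewrite be0 /=; rewrite subr0; apply: alx; lia.
rewrite (@telesc (fun i => q i M) lR N); last first.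
  move=> i iN; apply: edgeR => //; [| |apply: nop; lia];
  rewrite /q /quad; apply: quad2_R; rewrite beM /=; rewrite subr0; apply: alx; lia.
rewrite (@telesc (fun j => q 0%N j) (fun n => n%:Z) M); last first.
  move=> j jM; apply: edgeL => //; [| |apply: nop; lia];
  rewrite /q /quad; apply: quad2_L; rewrite al0 /= sub0r oppr_le0; apply: bex; lia.
rewrite (@telesc (fun j => q N j) (fun n => n%:Z) M); last first.
  move=> j jM; apply: edgeL => //; [| |apply: nop; lia];
  rewrite /q /quad; apply: quad2_L; rewrite alN /= sub0r oppr_le0; apply: bex; lia.
rewrite /= /q /quad al0 alN be0 beM /=. rewrite !subr0.
rewrite (@quad2_down 0 (ya - yb)) ?subr0 // ?subr_lt0 //.
rewrite (@quad2_up 0 (yc - yb)) ?subr0 // ?subr_gt0 //.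
case: hE => hE.
  rewrite (@quad2_up 0 (yc - ye)) ?subr0 // ?subr_gt0 ?(lt_trans hE) ?(lt_trans hab) //.
  by rewrite (@quad2_up 0 (ya - ye)) ?subr0 // ?subr_gt0.
rewrite (@quad2_down 0 (yc - ye)) ?subr0 // ?subr_lt0 //.
by rewrite (@quad2_down 0 (ya - ye)) ?subr0 // ?subr_lt0 // (lt_trans hab) // (lt_trans hbc).
Qed.
End G.

Arguments dot {R}. Arguments quad {R}. Arguments grid_contra {R}.
Arguments chain {R}. Arguments chain_refl {R}. Arguments chain_snoc {R e K P Q Q'}. Arguments chain_cat {R e K P Q S}.
Arguments chain_rev {R e K P Q}. Arguments chain_sub {R e e' K K' P Q}. Arguments curve_sep {R}. Arguments curve_chain {R}.
Arguments I01P {R}. Arguments curve_img_in {R}. Arguments curve_epsdelta {R}.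
Section P.
Variable R : realType.
Implicit Types (P Q : R * R) (K L : set (R * R)).

Lemma dot_pos (u v : R * R) (m : R) : 0 < m -> m <= `|u| -> `|u - v| < m / 2 -> 0 < dot u v.
Proof.
rewrite !prod_normE /dot /= => m0.
move: (u.1) (u.2) (v.1) (v.2) => a b c d.
rewrite le_max gt_max => /orP h /andP [].
rewrite !ltr_norml => /andP [h1 h2] /andP [h3 h4].
case: h; rewrite ler_normr => /orP [] h; nra.
Qed.

Definition sep K L := exists2 m : R, 0 < m & forall P Q, K P -> L Q -> m <= `|P - Q|.

Lemma sepU_l K1 K2 L : sep K1 L -> sep K2 L -> sep (K1 `|` K2) L.
Proof.
move=> [m1 m10 h1] [m2 m20 h2]; exists (Num.min m1 m2); first by rewrite lt_min m10 m20.
move=> P Q [] KP LQ; rewrite ge_min; apply/orP; [left; exact: h1|right; exact: h2].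
Qed.

Lemma sepU_r K L1 L2 : sep K L1 -> sep K L2 -> sep K (L1 `|` L2).
Proof.
move=> [m1 m10 h1] [m2 m20 h2]; exists (Num.min m1 m2); first by rewrite lt_min m10 m20.
move=> P Q KP [] LQ; rewrite ge_min; apply/orP; [left; exact: h1|right; exact: h2].
Qed.

Lemma curve_sep' (phi psi : R -> R * R) : is_curve phi -> is_curve psi ->
  ~ curves_meet phi psi -> sep (curve_img phi) (curve_img psi).
Proof.
move=> hp hq hm; have [m m0 hmm] := curve_sep phi psi hp hq hm.
by exists m => // _ _ [s Is <-] [t It <-]; apply: hmm.
Qed.

Lemma near_idx (f : nat -> R * R) n (e : R) i i' : 0 < e ->
  (forall k, (k < n)%N -> `|f k - f k.+1| < e) ->
  (i <= n)%N -> (i' <= n)%N -> (i' <= i.+1)%N -> (i <= i'.+1)%N -> `|f i - f i'| < e.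
Proof.
move=> e0 h iN i'N h1 h2.
have [E|[E|E]] : i' = i \/ i' = i.+1 \/ i = i'.+1 by lia.
all: subst.
- by rewrite subrr normr0.
- apply: h; lia.
- rewrite distrC; apply: h; lia.
Qed.

Lemma cross KA KB ya yb yc ye : sep KA KB ->
  (forall P, KA P -> 0 <= P.1) -> (forall Q, KB Q -> 0 <= Q.1) ->
  (forall e, 0 < e -> chain e KA (0, ya) (0, yc)) ->
  (forall e, 0 < e -> chain e KB (0, yb) (0, ye)) ->
  ya < yb -> yb < yc -> (ye < ya \/ yc < ye) -> False.
Proof.
move=> [m m0 hm] KAx KBx chA chB h1 h2 h3.
have m4 : 0 < m / 4 by rewrite divr_gt0.
have [N [al [al0 alN alK ale]]] := chA _ m4.
have [M [be [be0 beM beK bee]]] := chB _ m4.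
apply: (@grid_contra R al be N M ya yb yc ye al0 alN be0 beM h1 h2 h3).
- by move=> i iN; apply: KAx; exact: alK.
- by move=> j jM; apply: KBx; exact: beK.
- move=> i i' j j' iN i'N jM j'M h1' h2' h3' h4'.
  have cA := @near_idx al N (m / 4) i i' m4 ale iN i'N h1' h2'.
  have cB := @near_idx be M (m / 4) j j' m4 bee jM j'M h3' h4'.
  apply: (dot_pos _ _ _ m0 (hm _ _ (alK i iN) (beK j jM))).
  have -> : al i - be j - (al i' - be j') = (al i - al i') - (be j - be j').
    by rewrite !opprD addrACA.
  apply: (le_lt_trans (ler_normB _ _)).
  have -> : m / 2 = m / 4 + m / 4 by lra.
  exact: ltrD.
Qed.

Lemma ground_eta (phi : R -> R * R) : grounded phi -> phi 0 = (0, (phi 0).2).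
Proof. by case=> h _; move: h; case: (phi 0) => x y /= ->. Qed.

Lemma img_x (phi : R -> R * R) P : grounded phi -> curve_img phi P -> 0 <= P.1.
Proof. by case=> _ h [s Is <-]; apply: h. Qed.

Lemma meet_sym (phi psi : R -> R * R) : curves_meet phi psi -> curves_meet psi phi.
Proof. by case=> P [h1 h2]; exists P. Qed.

Lemma meet_chain (phi psi : R -> R * R) e : is_curve phi -> is_curve psi -> 0 < e ->
  curves_meet phi psi -> chain e (curve_img phi `|` curve_img psi) (phi 0) (psi 0).
Proof.
move=> hp hq e0 [P [[t1 I1 E1] [t2 I2 E2]]].
apply: (chain_cat (Q := P)).
  rewrite -E1; apply: (chain_sub (e := e) (K := curve_img phi)) => //.
  exact: curve_chain.
apply: chain_rev; rewrite -E2; apply: (chain_sub (e := e) (K := curve_img psi)) => //.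
exact: curve_chain.
Qed.

Lemma part1 (a b c d : R -> R * R) :
  is_curve a -> is_curve b -> is_curve c -> is_curve d ->
  grounded a -> grounded b -> grounded c -> grounded d ->
  (a 0).2 < (b 0).2 -> (b 0).2 < (c 0).2 -> (c 0).2 < (d 0).2 ->
  curves_meet a c -> curves_meet b d ->
  ~ curves_meet a b -> ~ curves_meet a d -> ~ curves_meet c b -> ~ curves_meet c d -> False.
Proof.
move=> ca cb cc cd ga gb gc gd h1 h2 h3 mac mbd nab nad ncb ncd.
apply: (@cross (curve_img a `|` curve_img c) (curve_img b `|` curve_img d)
   (a 0).2 (b 0).2 (c 0).2 (d 0).2) => //; last by right.
- apply: sepU_l; apply: sepU_r; exact: curve_sep'.
- by move=> P [] /img_x; [apply|apply].
- by move=> P [] /img_x; [apply|apply].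
- move=> e e0; rewrite -(ground_eta _ ga) -(ground_eta _ gc); exact: meet_chain.
- move=> e e0; rewrite -(ground_eta _ gb) -(ground_eta _ gd); exact: meet_chain.
Qed.

Lemma fst_cont : continuous (fun z : R * R => z.1).
Proof. move=> z; exact: cvg_fst. Qed.

Definition seg (P Q : R * R) (s : R) : R * R := P + s *: (Q - P).
Lemma seg_cont P Q : continuous (seg P Q).
Proof.
move=> s.
have -> : seg P Q = (fun _ => P) + (fun s => s *: (Q - P)) by [].
apply: continuousD; first exact: cst_continuous.
apply: continuousZr_tmp. exact: id.
Qed.
Lemma seg_curve P Q : is_curve (seg P Q).
Proof. exact/continuous_subspaceT/seg_cont. Qed.
Lemma segx P Q s : (seg P Q s).1 = P.1 + s * (Q.1 - P.1).
Proof. by []. Qed.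
Lemma segy P Q s : (seg P Q s).2 = P.2 + s * (Q.2 - P.2).
Proof. by []. Qed.
Lemma seg0 P Q : seg P Q 0 = P.
Proof. by rewrite /seg scale0r addr0. Qed.
Lemma seg1 P Q : seg P Q 1 = Q.
Proof. by rewrite /seg scale1r addrC subrK. Qed.

Lemma curve_bound (phi : R -> R * R) : is_curve phi ->
  exists B : R, forall s, I01 s -> `|(phi s).2| <= B.
Proof.
move=> hp.
have c1 : compact (curve_img phi) by apply: continuous_compact => //; exact: segment_compact.
have ne : curve_img phi !=set0.
  by exists (phi 0); exists 0 => //; apply/I01P; rewrite lexx ler01.
have cf : {within curve_img phi, continuous (fun z : R * R => `|z|)}.
  by apply: continuous_subspaceT => z; exact: norm_continuous.
have [z zin zmax] := compact_EVT_max ne c1 cf.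
exists `|z| => s Is; apply: le_trans (zmax (phi s) _); last by rewrite inE; exists s.
by rewrite prod_normE le_max lexx orbT.
Qed.

Lemma trap (a b c : R -> R * R) P t :
  is_curve a -> is_curve b -> is_curve c -> grounded a -> grounded b -> grounded c ->
  x_monotone a -> x_monotone c ->
  (a 0).2 < (b 0).2 -> (b 0).2 < (c 0).2 ->
  ~ curves_meet a b -> ~ curves_meet c b ->
  curve_img a P -> curve_img c P -> I01 t -> P.1 <= (b t).1 -> False.
Proof.
move=> ca cb cc ga gb gc xa xc h1 h2 nab ncb aP cP It Pt.
have P1 : 0 <= P.1 := img_x _ _ ga aP.
have [ts tsI tsE] : exists2 ts, I01 ts & (b ts).1 = P.1.
  have /I01P /andP [t0 t1] := It.
  have cont : {within `[0, t], continuous (fun s => (b s).1)}.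
    apply: (@continuous_subspaceW _ _ _ (I01 (R:=R))).
      by move=> x; rewrite /= in_itv /= => /andP [x0 h]; apply/I01P; rewrite x0 (le_trans h t1).
    move=> x; apply: continuous_comp; [exact: cb | exact: fst_cont].
  have b0 : (b 0).1 = 0 by case: gb.
  have [s sI sE] : exists2 s, s \in `[0, t] & (b s).1 = P.1.
    apply: (IVT t0 cont).
    by rewrite /= b0 ge_min le_max P1 Pt orbT.
  exists s => //; move: sI; rewrite in_itv /= => /andP [s0 st].
  by apply/I01P; rewrite s0 (le_trans st t1).
pose Y := (b ts).2.
have bts : b ts = (P.1, Y) by rewrite -tsE /Y; case: (b ts).
have YP : Y != P.2.
  apply/eqP => YE; apply: nab; exists P; split => //; exists ts => //.
  by rewrite bts YE; case: (P).
have [Ba hBa] := curve_bound _ ca.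
have [Bc hBc] := curve_bound _ cc.
pose K := `|Ba| + `|Bc| + `|Y| + 1.
have KBa : Ba < K by rewrite /K; have := ler_norm Ba; have := normr_ge0 Bc; have := normr_ge0 Y; lra.
have KBc : Bc < K by rewrite /K; have := ler_norm Bc; have := normr_ge0 Ba; have := normr_ge0 Y; lra.
have KY1 : Y < K by rewrite /K; have := ler_norm Y; have := normr_ge0 Bc; have := normr_ge0 Ba; lra.
have KY2 : - K < Y by rewrite /K; have := ler_norm (- Y); rewrite normrN; have := normr_ge0 Bc; have := normr_ge0 Ba; lra.
pose ye := if Y < P.2 then - K else K.
pose V := seg (P.1, Y) (P.1, ye).
pose H := seg (P.1, ye) (0, ye).
have nmV (phi : R -> R * R) : x_monotone phi -> curve_img phi P -> ~ curves_meet phi V.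
  move=> xp pP [Z [[s Is <-] [r Ir E]]].
  have : phi s = P.
    apply: xp; [by apply/mem_set; exists s|by apply/mem_set|].
    by rewrite -E segx /= subrr mulr0 addr0.
  move=> eP; move: E; rewrite eP => /(congr1 snd); rewrite segy /= => E.
  have /I01P /andP [r0 r1] := Ir.
  rewrite /ye in E; case: ifP E => hY E.
    have : 0 <= r * (K + Y) by apply: mulr_ge0 => //; lra.
    lra.
  have hY' : P.2 < Y by rewrite lt_neqAle eq_sym YP /= leNgt hY.
  have : 0 <= r * (K - Y) by apply: mulr_ge0 => //; lra.
  lra.
have nmH (phi : R -> R * R) (B : R) : (forall s, I01 s -> `|(phi s).2| <= B) -> B < K ->
    ~ curves_meet phi H.
  move=> hB BK [Z [[s Is <-] [r Ir E]]].
  have := hB s Is; rewrite -E segy /= subrr mulr0 addr0 /ye.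
  by case: ifP => _; rewrite ?normrN gtr0_norm ?(le_lt_trans (normr_ge0 _) BK)//; lra.
have I0 : I01 (0 : R) by apply/I01P; rewrite lexx ler01.
have I1 : I01 (1 : R) by apply/I01P; rewrite lexx ler01.
have cV : is_curve V by exact: seg_curve.
have cH : is_curve H by exact: seg_curve.
have hsep : sep (curve_img a `|` curve_img c) ((curve_img b `|` curve_img V) `|` curve_img H).
  apply: sepU_l; apply: sepU_r; try apply: sepU_r.
  - exact: curve_sep'.
  - apply: curve_sep' => //; exact: nmV.
  - apply: curve_sep' => //; exact: nmH hBa KBa.
  - exact: curve_sep'.
  - apply: curve_sep' => //; exact: nmV.
  - apply: curve_sep' => //; exact: nmH hBc KBc.
have hxA : forall Q, (curve_img a `|` curve_img c) Q -> 0 <= Q.1.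
  by move=> Q [] /img_x; [apply|apply].
have hxB : forall Q, ((curve_img b `|` curve_img V) `|` curve_img H) Q -> 0 <= Q.1.
  move=> Q [[|]|].
  + exact: img_x.
  + by case=> r Ir <-; rewrite segx /= subrr mulr0 addr0.
  + case=> r Ir <-; rewrite segx /=; have /I01P /andP [r0 r1] := Ir; nra.
have chA : forall e, 0 < e -> chain e (curve_img a `|` curve_img c) (0, (a 0).2) (0, (c 0).2).
  move=> e e0; rewrite -(ground_eta _ ga) -(ground_eta _ gc); apply: meet_chain => //.
  by exists P.
have chB : forall e, 0 < e -> chain e ((curve_img b `|` curve_img V) `|` curve_img H) (0, (b 0).2) (0, ye).
  move=> e e0; rewrite -(ground_eta _ gb).
  apply: (chain_cat (Q := b ts)).
    apply: (chain_sub (e := e) (K := curve_img b)) => //; last exact: curve_chain.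
    by move=> ? ?; left; left.
  apply: (chain_cat (Q := V 1)).
    have -> : b ts = V 0 by rewrite /V seg0.
    apply: (chain_sub (e := e) (K := curve_img V)) => //; last exact: curve_chain.
    by move=> ? ?; left; right.
  have -> : V 1 = H 0 by rewrite /V /H seg0 seg1.
  have -> : (0, ye) = H 1 by rewrite /H seg1.
  apply: (chain_sub (e := e) (K := curve_img H)) => //; last exact: curve_chain.
  try by move=> ? ?; right.
have hye : ye < (a 0).2 \/ (c 0).2 < ye.
  rewrite /ye; case: ifP => _; [left|right].
    have := hBa 0 I0; have := ler_norm (- (a 0).2); rewrite normrN; lra.
  have := hBc 0 I0; have := ler_norm ((c 0).2); lra.
exact: (cross _ _ _ _ _ _ hsep hxA hxB chA chB h1 h2 hye).
Qed.

Lemma part2 (a b c d : R -> R * R) :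
  is_curve a -> is_curve b -> is_curve c -> is_curve d ->
  grounded a -> grounded b -> grounded c -> grounded d ->
  x_monotone a -> x_monotone b -> x_monotone c -> x_monotone d ->
  (a 0).2 < (b 0).2 -> (b 0).2 < (c 0).2 -> (c 0).2 < (d 0).2 ->
  ~ curves_meet a b -> ~ curves_meet b c -> ~ curves_meet c d ->
  curves_meet a c -> curves_meet b d -> False.
Proof.
move=> ca cb cc cd ga gb gc gd xa xb xc xd h1 h2 h3 nab nbc ncd [P [aP cP]] [Q [bQ dQ]].
have ncb : ~ curves_meet c b by move/meet_sym.
have ndc : ~ curves_meet d c by move/meet_sym.
have hb : forall t, I01 t -> (b t).1 < P.1.
  move=> t It; rewrite ltNge; apply/negP => Pt.
  exact: (trap a b c P t ca cb cc ga gb gc xa xc h1 h2 nab ncb aP cP It Pt).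
have hc : forall t, I01 t -> (c t).1 < Q.1.
  move=> t It; rewrite ltNge; apply/negP => Qt.
  exact: (trap b c d Q t cb cc cd gb gc gd xb xd h2 h3 nbc ndc bQ dQ It Qt).
case: bQ => tq Iq Eq; case: cP => tp Ip Ep.
have := hb tq Iq; have := hc tp Ip; rewrite Eq Ep => l1 l2.
by have := lt_trans l1 l2; rewrite ltxx.
Qed.
End P.

Arguments part1 {R}. Arguments part2 {R}.

Theorem lemma8 (R : realType) (I : Type) (c : I -> R -> R * R)
  (Hcurve : forall a, is_curve (c a))
  (Hground : forall a, grounded (c a))
  (Hdistinct : forall a b, a <> b -> (c a 0%R).2 <> (c b 0%R).2) :
  ~ induced_ordered_subgraph M1_rel (endpoint_lt c) (intersection_adj c) /\
  ((forall a, x_monotone (c a)) ->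
   ~ induced_ordered_subgraph P4_rel (endpoint_lt c) (complement_adj c)).
Proof.
pose o0 : 'I_4 := @Ordinal 4 0 isT.
pose o1 : 'I_4 := @Ordinal 4 1 isT.
pose o2 : 'I_4 := @Ordinal 4 2 isT.
pose o3 : 'I_4 := @Ordinal 4 3 isT.
have neqf (f : 'I_4 -> I) (finj : injective f) (i j : 'I_4) : i != j -> f i <> f j.
  by move=> ij /finj /eqP; rewrite (negbTE ij).
split.
  case=> f [finj [flt fadj]].
  have nomeet (i j : 'I_4) : i != j -> ~~ M1_rel i j -> ~ curves_meet (c (f i)) (c (f j)).
    move=> ij nr hm; have : M1_rel i j by apply/(fadj i j ij).2; split => //; exact: neqf.
    by rewrite (negbTE nr).
  have meet (i j : 'I_4) : i != j -> M1_rel i j -> curves_meet (c (f i)) (c (f j)).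
    by move=> ij r; have [] := (fadj i j ij).1 r.
  apply: (part1 (c (f o0)) (c (f o1)) (c (f o2)) (c (f o3))) => //.
  - exact: (flt o0 o1).
  - exact: (flt o1 o2).
  - exact: (flt o2 o3).
  - exact: (meet o0 o2).
  - exact: (meet o1 o3).
  - exact: (nomeet o0 o1).
  - exact: (nomeet o0 o3).
  - exact: (nomeet o2 o1).
  - exact: (nomeet o2 o3).
move=> xm; case=> f [finj [flt fadj]].
have nomeet (i j : 'I_4) : i != j -> P4_rel i j -> ~ curves_meet (c (f i)) (c (f j)).
  by move=> ij r; have [] := (fadj i j ij).1 r.
have meet (i j : 'I_4) : i != j -> ~~ P4_rel i j -> curves_meet (c (f i)) (c (f j)).
  move=> ij nr; apply: contrapT => hm.
  have : P4_rel i j by apply/(fadj i j ij).2; split => //; exact: neqf.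
  by rewrite (negbTE nr).
apply: (part2 (c (f o0)) (c (f o1)) (c (f o2)) (c (f o3))) => //.
- exact: (flt o0 o1).
- exact: (flt o1 o2).
- exact: (flt o2 o3).
- exact: (nomeet o0 o1).
- exact: (nomeet o1 o2).
- exact: (nomeet o2 o3).
- exact: (meet o0 o2).
- exact: (meet o1 o3).
Qed.
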